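(* For Dallal's model, reparameterize by $(\gamma,U,V)$ with $U=(1+\gamma)\lambda_0$ and $V=(1+\gamma)\lambda_1$; this maps $\Omega$ bijectively onto $(0,1)^3$. Jeffreys' prior in the parameterization $(\gamma,U,V)$ is $$\pi_J(\gamma,u,v)\propto \frac{\gamma^{-1/2}(1-\gamma)^{-1/2}}{1+\gamma}\,(u+rv)^{1/2}\,u^{-1/2}(1-u)^{-1/2}\,v^{-1/2}(1-v)^{-1/2},\qquad 0<\gamma,u,v<1,$$ and this prior is proper. Moreover, under $\pi_J$ the parameter $\gamma$ is independent of $(U,V)$ and its marginal prior density is $$\pi_J(\gamma)=\frac{\sqrt2}{\pi}\,\frac{\gamma^{-1/2}(1-\gamma)^{-1/2}}{1+\gamma},\qquad 0<\gamma<1 .$$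
   Context: Dallal's model for bilateral data. There are two groups, $i=1$ (treatment) and $i=0$ (control), with fixed sample sizes $m_{+1},m_{+0}\ge 1$. For each group $i$, the counts $(m_{0i},m_{1i},m_{2i})$, where $m_{hi}$ is the number of subjects in group $i$ with exactly $h$ of two sites cured and $m_{0i}+m_{1i}+m_{2i}=m_{+i}$, follow a trinomial (multinomial) distribution with $m_{+i}$ trials and cell probabilities $p_{0i}=1-(1+\gamma)\lambda_i$, $p_{1i}=2\gamma\lambda_i$, $p_{2i}=(1-\gamma)\lambda_i$. The two groups are independent. The parameter space is $\Omega=\{(\gamma,\lambda_0,\lambda_1):0<\gamma<1,\ 0<\lambda_0,\lambda_1<1/(1+\gamma)\}$. Write $m_{1+}=m_{10}+m_{11}$, $m_{2+}=m_{20}+m_{21}$, $m_{0+}=m_{00}+m_{01}$, and $r=m_{+1}/m_{+0}$. Jeffreys' prior for a given parameterization is the density proportional to the square root of the determinant of the expected Fisher information matrix of this product-trinomial model (with $m_{+0},m_{+1}$ fixed) in that parameterization. *)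

(* Defs.v *)
From Stdlib Require Import Reals Lra ClassicalEpsilon.
Open Scope R_scope.

(* The derivative of f at x (meaningful when f is differentiable at x). *)
Definition deriv1 (f : R -> R) (x : R) : R :=
  epsilon (inhabits 0) (fun l => derivable_pt_lim f x l).

(* Riemann integral of f over [a,b] (0 if f is not Riemann integrable). *)
Definition RInt (f : R -> R) (a b : R) : R :=
  match excluded_middle_informative (inhabited (Riemann_integrable f a b)) with
  | left H => RiemannInt (epsilon H (fun _ => True))
  | right _ => 0
  end.

Definition int2 (f : R -> R -> R) (a b : R) : R :=
  RInt (fun x => RInt (fun y => f x y) a b) a b.
Definition int3 (f : R -> R -> R -> R) (a b : R) : R :=
  RInt (fun x => int2 (f x) a b) a b.

(* Improper integral over the open cube (0,1)^k, as the limit of the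
   integrals over [a,b]^k as a -> 0+ and b -> 1-. *)
Definition limit_cube (F : R -> R -> R) (L : R) : Prop :=
  forall eps, 0 < eps -> exists d, 0 < d /\
    forall a b, 0 < a < d -> 1 - d < b < 1 -> Rabs (F a b - L) < eps.

Definition improper1 (f : R -> R) (L : R) := limit_cube (RInt f) L.
Definition improper2 (f : R -> R -> R) (L : R) := limit_cube (int2 f) L.
Definition improper3 (f : R -> R -> R -> R) (L : R) := limit_cube (int3 f) L.

Definition in01 (x : R) : Prop := 0 < x < 1.

Definition inOmega (t : R * R * R) : Prop :=
  let '(g, l0, l1) := t in
  0 < g < 1 /\ 0 < l0 < 1 / (1 + g) /\ 0 < l1 < 1 / (1 + g).

Definition phi (t : R * R * R) : R * R * R :=
  let '(g, l0, l1) := t in (g, (1 + g) * l0, (1 + g) * l1).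

Definition pcell (h : nat) (g lam : R) : R :=
  match h with
  | O => 1 - (1 + g) * lam
  | 1%nat => 2 * g * lam
  | _ => (1 - g) * lam
  end.

Definition pOmega (h i : nat) (g l0 l1 : R) : R :=
  pcell h g (if Nat.eqb i 0 then l0 else l1).

(* p_{h i} in the parameterization (gamma, U, V): the composition of
   pOmega with the inverse of phi. *)
Definition pGUV (h i : nat) (g u v : R) : R :=
  pOmega h i g (u / (1 + g)) (v / (1 + g)).

Definition sect (j : nat) (f : R -> R -> R -> R) (x y z : R) (t : R) : R :=
  match j with
  | O => f t y z
  | 1%nat => f x t z
  | _ => f x y t
  end.

Definition coord (j : nat) (x y z : R) : R :=
  match j with O => x | 1%nat => y | _ => z end.

Definition dlogp (p : nat -> nat -> R -> R -> R -> R) (h i j : nat)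
  (x y z : R) : R :=
  deriv1 (fun t => ln (sect j (p h i) x y z t)) (coord j x y z).

(* Expected Fisher information (entry (j,k)) of the product-trinomial
   model with m0 = m_{+0}, m1 = m_{+1} trials: the sum over the groups of
   m_{+i} times the expected Fisher information of a single categorical
   draw, E[d_j log p * d_k log p] = sum_h p_h d_j log p_h d_k log p_h. *)
Definition fisher (p : nat -> nat -> R -> R -> R -> R) (m0 m1 : nat)
  (j k : nat) (x y z : R) : R :=
  INR m0 * (sum_f_R0 (fun h => p h 0%nat x y z * dlogp p h 0 j x y z
                                  * dlogp p h 0 k x y z) 2)
  + INR m1 * (sum_f_R0 (fun h => p h 1%nat x y z * dlogp p h 1 j x y z
                                  * dlogp p h 1 k x y z) 2).

Definition det3 (M : nat -> nat -> R) : R :=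
  M 0%nat 0%nat * (M 1%nat 1%nat * M 2%nat 2%nat - M 1%nat 2%nat * M 2%nat 1%nat)
  - M 0%nat 1%nat * (M 1%nat 0%nat * M 2%nat 2%nat - M 1%nat 2%nat * M 2%nat 0%nat)
  + M 0%nat 2%nat * (M 1%nat 0%nat * M 2%nat 1%nat - M 1%nat 1%nat * M 2%nat 0%nat).

Definition jeffreysGUV (m0 m1 : nat) (g u v : R) : R :=
  sqrt (det3 (fun j k => fisher pGUV m0 m1 j k g u v)).

Definition pi_gamma (g : R) : R :=
  sqrt 2 / PI * (/ sqrt g * / sqrt (1 - g) / (1 + g)).

(* Main.v *)
Require Import Defs.
From Stdlib Require Import Reals ClassicalEpsilon Lra Lia.
From Coquelicot Require Import Coquelicot.
Open Scope R_scope.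

Lemma LC_ext F1 F2 L : (forall a b, 0 < a < 1/2 -> 1/2 < b < 1 -> F1 a b = F2 a b) ->
  limit_cube F1 L -> limit_cube F2 L.
Proof.
  intros He H eps Heps. destruct (H eps Heps) as [d [Hd Hd']].
  exists (Rmin d (1/2)). split. apply Rmin_glb_lt; lra.
  intros a b Ha Hb. pose proof (Rmin_l d (1/2)). pose proof (Rmin_r d (1/2)).
  rewrite <- He by lra. apply Hd'; lra.
Qed.

Lemma LC_scal F L c : limit_cube F L -> limit_cube (fun a b => c * F a b) (c * L).
Proof.
  intros H eps Heps.
  destruct (H (eps / (Rabs c + 1))) as [d [Hd Hd']].
  { apply Rdiv_lt_0_compat; auto. pose proof (Rabs_pos c); lra. }
  exists d; split; auto. intros a b Ha Hb.
  rewrite <- Rmult_minus_distr_l, Rabs_mult.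
  specialize (Hd' a b Ha Hb). pose proof (Rabs_pos c).
  pose proof (Rabs_pos (F a b - L)).
  apply Rle_lt_trans with ((Rabs c + 1) * Rabs (F a b - L)). nra.
  apply Rmult_lt_reg_l with (/ (Rabs c + 1)). apply Rinv_0_lt_compat; lra.
  rewrite <- Rmult_assoc, Rinv_l by lra. unfold Rdiv in Hd'. lra.
Qed.

Lemma LC_mul F G L1 L2 : limit_cube F L1 -> limit_cube G L2 ->
  limit_cube (fun a b => F a b * G a b) (L1 * L2).
Proof.
  intros HF HG eps Heps.
  pose proof (Rabs_pos L1). pose proof (Rabs_pos L2).
  set (e1 := Rmin 1 (eps / (2 * (Rabs L2 + 1)))).
  set (e2 := eps / (2 * (Rabs L1 + 2))).
  assert (He1 : 0 < e1). { apply Rmin_glb_lt. lra. apply Rdiv_lt_0_compat; lra. }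
  assert (He2 : 0 < e2) by (apply Rdiv_lt_0_compat; lra).
  destruct (HF e1 He1) as [d1 [Hd1 Hd1']].
  destruct (HG e2 He2) as [d2 [Hd2 Hd2']].
  exists (Rmin d1 d2). split. apply Rmin_glb_lt; lra.
  intros a b Ha Hb. pose proof (Rmin_l d1 d2). pose proof (Rmin_r d1 d2).
  assert (A1 : Rabs (F a b - L1) < e1) by (apply Hd1'; lra).
  assert (A2 : Rabs (G a b - L2) < e2) by (apply Hd2'; lra).
  replace (F a b * G a b - L1 * L2) with (F a b * (G a b - L2) + L2 * (F a b - L1)) by ring.
  eapply Rle_lt_trans. apply Rabs_triang. rewrite !Rabs_mult.
  assert (e1 <= 1) by apply Rmin_l.
  assert (e1 <= eps / (2 * (Rabs L2 + 1))) by apply Rmin_r.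
  assert (HFb : Rabs (F a b) <= Rabs L1 + 1).
  { replace (F a b) with (L1 + (F a b - L1)) by ring.
    eapply Rle_trans. apply Rabs_triang. lra. }
  assert (X : Rabs (F a b) * Rabs (G a b - L2) <= (Rabs L1 + 2) * e2).
  { apply Rmult_le_compat; try apply Rabs_pos; lra. }
  assert (Y : Rabs L2 * Rabs (F a b - L1) <= (Rabs L2 + 1) * e1).
  { apply Rmult_le_compat; try apply Rabs_pos; lra. }
  assert (X' : (Rabs L1 + 2) * e2 = eps / 2) by (unfold e2; field; lra).
  assert (Y' : (Rabs L2 + 1) * e1 <= eps / 2).
  { apply Rle_trans with ((Rabs L2 + 1) * (eps / (2 * (Rabs L2 + 1)))).
    apply Rmult_le_compat_l; lra. right; field; lra. }
  assert (X2 : Rabs (F a b) * Rabs (G a b - L2) < (Rabs L1 + 2) * e2).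
  { apply Rle_lt_trans with ((Rabs L1 + 2) * Rabs (G a b - L2)).
    apply Rmult_le_compat_r; [apply Rabs_pos|lra].
    apply Rmult_lt_compat_l; lra. }
  lra.
Qed.

Lemma LC_diff (P Q : R -> R) A B :
  (forall eps, 0 < eps -> exists d, 0 < d /\ forall a, 0 < a < d -> Rabs (P a - A) < eps) ->
  (forall eps, 0 < eps -> exists d, 0 < d /\ forall b, 1 - d < b < 1 -> Rabs (Q b - B) < eps) ->
  limit_cube (fun a b => Q b - P a) (B - A).
Proof.
  intros HP HQ eps Heps.
  destruct (HP (eps/2)) as [d1 [Hd1 Hd1']]; [lra|].
  destruct (HQ (eps/2)) as [d2 [Hd2 Hd2']]; [lra|].
  exists (Rmin d1 d2). split. apply Rmin_glb_lt; lra.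
  intros a b Ha Hb. pose proof (Rmin_l d1 d2). pose proof (Rmin_r d1 d2).
  assert (A1 : Rabs (P a - A) < eps/2) by (apply Hd1'; lra).
  assert (A2 : Rabs (Q b - B) < eps/2) by (apply Hd2'; lra).
  replace (Q b - P a - (B - A)) with ((Q b - B) - (P a - A)) by ring.
  unfold Rminus at 1. eapply Rle_lt_trans. apply Rabs_triang. rewrite Rabs_Ropp. lra.
Qed.

Lemma LC_mono (S : R -> R -> R) M :
  (forall a a' b b', 0 < a <= a' -> a' < 1/2 -> 1/2 < b' <= b -> b < 1 -> S a' b' <= S a b) ->
  (forall a b, 0 < a < 1/2 -> 1/2 < b < 1 -> S a b <= M) ->
  exists L, limit_cube S L /\ forall a b, 0 < a < 1/2 -> 1/2 < b < 1 -> S a b <= L.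
Proof.
  intros Hm Hb.
  set (E := fun y => exists a b, 0 < a < 1/2 /\ 1/2 < b < 1 /\ y = S a b).
  destruct (completeness E) as [L [HL1 HL2]].
  { exists M. intros y [a [b [Ha [Hb' ->]]]]. auto. }
  { exists (S (1/4) (3/4)). exists (1/4), (3/4). repeat split; lra. }
  exists L. split.
  2:{ intros a b Ha Hb'. apply HL1. exists a, b. auto. }
  intros eps Heps.
  destruct (classic (exists a0 b0, 0 < a0 < 1/2 /\ 1/2 < b0 < 1 /\ L - eps < S a0 b0))
    as [[a0 [b0 [Ha0 [Hb0 Hs]]]] | Hn].
  - exists (Rmin a0 (1 - b0)). split. apply Rmin_glb_lt; lra.
    intros a b Ha Hb'. pose proof (Rmin_l a0 (1-b0)). pose proof (Rmin_r a0 (1-b0)).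
    assert (S a0 b0 <= S a b) by (apply Hm; lra).
    assert (S a b <= L) by (apply HL1; exists a, b; repeat split; lra).
    apply Rabs_def1; lra.
  - exfalso. assert (L <= L - eps); [|lra]. apply HL2.
    intros y [a [b [Ha [Hb' ->]]]]. apply Rnot_lt_le. intro. apply Hn.
    exists a, b; auto.
Qed.
Definition ff t := / sqrt t * / sqrt (1 - t) / (1 + t).
Definition FF t := sqrt 2 * atan (sqrt (2 * t / (1 - t))).
Lemma FF_der t : 0 < t < 1 -> is_derive FF t (ff t).
Proof.
  intros Ht. unfold FF, ff. auto_derive.
  { repeat split; try lra. apply Rmult_lt_0_compat. lra. apply Rinv_0_lt_compat; lra. }
  assert (P1 : 0 <= 2 * t * / (1 + - t)). { apply Rlt_le, Rmult_lt_0_compat. lra. apply Rinv_0_lt_compat; lra. }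
  pose proof (sqrt_sqrt _ P1) as Hs2.
  pose proof (sqrt_lt_R0 2 ltac:(lra)) as Ha.
  pose proof (sqrt_lt_R0 t ltac:(lra)) as Hb.
  pose proof (sqrt_lt_R0 (1 - t) ltac:(lra)) as Hc.
  assert (Hs : sqrt (2 * t * / (1 + - t)) = sqrt 2 * sqrt t / sqrt (1 - t)).
  { rewrite <- sqrt_mult_alt by lra. unfold Rdiv. rewrite <- sqrt_inv.
    rewrite <- sqrt_mult_alt by lra. f_equal. }
  rewrite !Rmult_1_r, Hs2, Hs.
  pose proof (sqrt_sqrt (1 - t) ltac:(lra)) as Ec.
  set (a := sqrt 2) in *. set (b := sqrt t) in *. set (c := sqrt (1-t)) in *.
  clearbody a b c. replace (1 + - t) with (c * c) by (rewrite Ec; ring).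
  replace t with (1 - c * c) by lra. field. repeat split; try lra; nra.
Qed.

Lemma cont_eps f x : continuous f x -> forall eps, 0 < eps ->
  exists d, 0 < d /\ forall y, Rabs (y - x) < d -> Rabs (f y - f x) < eps.
Proof.
  intros H eps He.
  destruct (proj1 (filterlim_locally f (f x)) H (mkposreal eps He)) as [d Hd].
  exists d. split. apply cond_pos. intros y Hy. apply (Hd y). exact Hy.
Qed.

Lemma FF_cont0 : continuous FF 0.
Proof.
  unfold FF.
  apply (continuous_mult (fun _ => sqrt 2) (fun t => atan (sqrt (2 * t / (1 - t))))).
  apply continuous_const.
  apply continuous_atan_comp, continuous_sqrt_comp; apply (@ex_derive_continuous R_AbsRing R_NormedModule).
  auto_derive. lra.
Qed.

Definition GG b := sqrt 2 * (PI / 2 - atan (sqrt ((1 - b) / (2 * b)))).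
Lemma GG_cont1 : continuous GG 1.
Proof.
  unfold GG.
  apply (continuous_mult (fun _ => sqrt 2) (fun t => PI / 2 - atan (sqrt ((1 - t) / (2 * t))))).
  apply continuous_const.
  apply (continuous_minus (fun _ => PI/2) (fun t => atan (sqrt ((1 - t) / (2 * t))))).
  apply continuous_const.
  apply continuous_atan_comp, continuous_sqrt_comp; apply (@ex_derive_continuous R_AbsRing R_NormedModule).
  auto_derive. lra.
Qed.

Lemma FF_GG b : 0 < b < 1 -> FF b = GG b.
Proof.
  intros Hb. unfold FF, GG. f_equal.
  assert (0 < sqrt ((1 - b) / (2 * b))) by (apply sqrt_lt_R0; apply Rdiv_lt_0_compat; lra).
  rewrite <- atan_inv by auto. f_equal.
  rewrite <- sqrt_inv. f_equal. field. lra.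
Qed.

Lemma FF_lim0 : forall eps, 0 < eps -> exists d, 0 < d /\ forall a, 0 < a < d -> Rabs (FF a - 0) < eps.
Proof.
  intros eps He. destruct (cont_eps _ _ FF_cont0 eps He) as [d [Hd H]].
  exists d; split; auto. intros a Ha.
  assert (E : FF 0 = 0).
  { unfold FF. replace (2 * 0 / (1 - 0)) with 0 by field. rewrite sqrt_0, atan_0. ring. }
  specialize (H a). rewrite E in H. apply H. rewrite Rminus_0_r, Rabs_pos_eq; lra.
Qed.

Lemma FF_lim1 : forall eps, 0 < eps -> exists d, 0 < d /\ forall b, 1 - d < b < 1 -> Rabs (FF b - PI / sqrt 2) < eps.
Proof.
  intros eps He. destruct (cont_eps _ _ GG_cont1 eps He) as [d [Hd H]].
  exists (Rmin d 1); split. apply Rmin_glb_lt; lra. intros b Hb.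
  pose proof (Rmin_l d 1). pose proof (Rmin_r d 1).
  rewrite FF_GG by lra.
  replace (PI / sqrt 2) with (GG 1).
  apply H. rewrite Rabs_minus_sym, Rabs_pos_eq; lra.
  unfold GG. replace ((1 - 1) / (2 * 1)) with 0 by field. rewrite sqrt_0, atan_0.
  pose proof (sqrt_sqrt 2 ltac:(lra)). pose proof (sqrt_lt_R0 2 ltac:(lra)).
  apply Rmult_eq_reg_r with (sqrt 2). 2: lra. field_simplify; try lra. replace (sqrt 2 ^ 2) with (sqrt 2 * sqrt 2) by ring. rewrite H2. field.
Qed.

Lemma ff_cont t : 0 < t < 1 -> continuous ff t.
Proof.
  intros Ht. apply (@ex_derive_continuous R_AbsRing R_NormedModule).
  unfold ff. auto_derive. repeat split; try lra.
  apply Rgt_not_eq, sqrt_lt_R0; lra. apply Rgt_not_eq, sqrt_lt_R0; lra.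
Qed.

Lemma ff_isRInt a b : 0 < a -> a <= b -> b < 1 -> is_RInt ff a b (FF b - FF a).
Proof.
  intros Ha Hab Hb.
  change (FF b - FF a) with (minus (FF b) (FF a)).
  apply (is_RInt_derive FF ff a b); intros x Hx;
    rewrite Rmin_left, Rmax_right in Hx by auto.
  apply FF_der; lra. apply ff_cont; lra.
Qed.

Lemma ff_ex a b : 0 < a -> a <= b -> b < 1 -> ex_RInt ff a b.
Proof. intros. eexists. apply ff_isRInt; auto. Qed.

Lemma ff_RInt a b : 0 < a -> a <= b -> b < 1 -> RInt ff a b = FF b - FF a.
Proof. intros. apply is_RInt_unique, ff_isRInt; auto. Qed.

Lemma LC_ff : limit_cube (fun a b => RInt ff a b) (PI / sqrt 2).
Proof.
  apply LC_ext with (fun a b => FF b - FF a).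
  { intros a b Ha Hb. rewrite ff_RInt; auto; lra. }
  replace (PI / sqrt 2) with (PI / sqrt 2 - 0) by ring.
  apply LC_diff. apply FF_lim0. apply FF_lim1.
Qed.

Lemma FF_ge0 a : 0 < a < 1 -> 0 <= FF a.
Proof.
  intros Ha. unfold FF. apply Rmult_le_pos. apply sqrt_pos.
  rewrite <- atan_0. left. apply atan_increasing, sqrt_lt_R0.
  apply Rdiv_lt_0_compat; lra.
Qed.

Lemma FF_le b : FF b <= sqrt 2 * (PI / 2).
Proof.
  unfold FF. apply Rmult_le_compat_l. apply sqrt_pos.
  destruct (atan_bound (sqrt (2 * b / (1 - b)))). lra.
Qed.

Lemma DR_bridge f a b : ex_RInt f a b -> Defs.RInt f a b = RInt f a b.
Proof.
  intros H. unfold Defs.RInt.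
  destruct (excluded_middle_informative _) as [Hi | Hn].
  - rewrite (RInt_Reals f a b (epsilon Hi (fun _ => True))). reflexivity.
  - exfalso. apply Hn. constructor. apply ex_RInt_Reals_0. auto.
Qed.

Lemma DR_ext f g a b : a <= b -> (forall x, a <= x <= b -> f x = g x) -> ex_RInt g a b ->
  Defs.RInt f a b = RInt g a b.
Proof.
  intros Hab He Hg.
  assert (Hf : ex_RInt f a b).
  { apply ex_RInt_ext with g; auto. intros x Hx.
    rewrite Rmin_left, Rmax_right in Hx by auto. symmetry; apply He; lra. }
  rewrite DR_bridge by auto. apply RInt_ext. intros x Hx.
  rewrite Rmin_left, Rmax_right in Hx by auto. apply He; lra.
Qed.

Lemma sqrt_holder s t : 0 <= s -> 0 <= t -> Rabs (sqrt s - sqrt t) <= sqrt (Rabs (s - t)).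
Proof.
  assert (K : forall s t, 0 <= t <= s -> sqrt s - sqrt t <= sqrt (s - t)).
  { intros s0 t0 H.
    pose proof (sqrt_pos t0). pose proof (sqrt_pos (s0 - t0)).
    assert (sqrt s0 <= sqrt t0 + sqrt (s0 - t0)); [|lra].
    rewrite <- (sqrt_square (sqrt t0 + sqrt (s0 - t0))) by lra.
    apply sqrt_le_1_alt.
    replace ((sqrt t0 + sqrt (s0 - t0)) * (sqrt t0 + sqrt (s0 - t0))) with
      (sqrt t0 * sqrt t0 + sqrt (s0 - t0) * sqrt (s0 - t0) + 2 * sqrt t0 * sqrt (s0 - t0)) by ring.
    rewrite !sqrt_sqrt by lra. nra. }
  intros Hs Ht. destruct (Rle_dec t s).
  - rewrite !Rabs_pos_eq; try lra. apply K; lra.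
    first [assert (sqrt t <= sqrt s) by (apply sqrt_le_1_alt; lra) | assert (sqrt s <= sqrt t) by (apply sqrt_le_1_alt; lra)]; lra.
  - rewrite Rabs_minus_sym, (Rabs_minus_sym s).
    rewrite !Rabs_pos_eq; try lra. apply K; lra.
    first [assert (sqrt t <= sqrt s) by (apply sqrt_le_1_alt; lra) | assert (sqrt s <= sqrt t) by (apply sqrt_le_1_alt; lra)]; lra.
Qed.

Lemma eps_cont f x : (forall eps, 0 < eps ->
  exists d, 0 < d /\ forall y, Rabs (y - x) < d -> Rabs (f y - f x) < eps) -> continuous f x.
Proof.
  intros H. apply (proj2 (filterlim_locally f (f x))). intros eps.
  destruct (H eps (cond_pos eps)) as [d [Hd Hd']].
  exists (mkposreal d Hd). intros y Hy. apply Hd'. exact Hy.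
Qed.

Definition kk t := / sqrt t * / sqrt (1 - t).

Lemma kk_cont t : 0 < t < 1 -> continuous kk t.
Proof.
  intros Ht. apply (@ex_derive_continuous R_AbsRing R_NormedModule).
  unfold kk. auto_derive. repeat split; try lra.
  apply Rgt_not_eq, sqrt_lt_R0; lra. apply Rgt_not_eq, sqrt_lt_R0; lra.
Qed.

Lemma kk_pos t : 0 < t < 1 -> 0 < kk t.
Proof.
  intros. unfold kk. apply Rmult_lt_0_compat; apply Rinv_0_lt_compat, sqrt_lt_R0; lra.
Qed.

Lemma cont_ex (f : R -> R) a b : (forall x, a <= x <= b -> continuous f x) -> a <= b -> ex_RInt f a b.
Proof.
  intros H Hab. apply (ex_RInt_continuous (V:=R_CompleteNormedModule)). intros z Hz.
  rewrite Rmin_left, Rmax_right in Hz by auto. apply H; auto.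
Qed.

Lemma kk_ex a b : 0 < a -> a <= b -> b < 1 -> ex_RInt kk a b.
Proof. intros. apply cont_ex; auto. intros; apply kk_cont; lra. Qed.

Lemma RInt_scalR (f : R -> R) a b c : ex_RInt f a b -> RInt (fun x => c * f x) a b = c * RInt f a b.
Proof. intros H. exact (RInt_scal f a b c H). Qed.
Lemma ex_RInt_scalR (f : R -> R) a b c : ex_RInt f a b -> ex_RInt (fun x => c * f x) a b.
Proof. intros H. exact (ex_RInt_scal f a b c H). Qed.

Lemma kk_int_le a b : 0 < a -> a <= b -> b < 1 -> RInt kk a b <= sqrt 2 * PI.
Proof.
  intros Ha Hab Hb.
  apply Rle_trans with (RInt (fun t => 2 * ff t) a b).
  - apply RInt_le; auto. apply kk_ex; auto. apply ex_RInt_scalR, ff_ex; auto.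
    intros x Hx. pose proof (kk_pos x ltac:(lra)). unfold ff.
    change (/ sqrt x * / sqrt (1-x)) with (kk x).
    assert (/2 <= /(1+x)) by (apply Rinv_le_contravar; lra). unfold Rdiv. nra.
  - rewrite RInt_scalR by (apply ff_ex; auto). rewrite ff_RInt by auto.
    pose proof (FF_ge0 a ltac:(lra)). pose proof (FF_le b). lra.
Qed.

Lemma RInt_sub (f : R -> R) a a' b' b : a <= a' -> a' <= b' -> b' <= b -> ex_RInt f a b ->
  (forall x, a < x < b -> 0 <= f x) -> RInt f a' b' <= RInt f a b.
Proof.
  intros H1 H2 H3 He Hp.
  assert (E1 : ex_RInt f a a') by (apply (ex_RInt_Chasles_1 (V:=R_CompleteNormedModule)) with b; [split; lra | auto]).
  assert (E2 : ex_RInt f a' b) by (apply (ex_RInt_Chasles_2 (V:=R_CompleteNormedModule)) with a; [split; lra | auto]).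
  assert (E3 : ex_RInt f a' b') by (apply (ex_RInt_Chasles_1 (V:=R_CompleteNormedModule)) with b; [split; lra | auto]).
  assert (E4 : ex_RInt f b' b) by (apply (ex_RInt_Chasles_2 (V:=R_CompleteNormedModule)) with a'; [split; lra | auto]).
  pose proof (RInt_Chasles (V:=R_CompleteNormedModule) f a a' b E1 E2) as C1.
  pose proof (RInt_Chasles (V:=R_CompleteNormedModule) f a' b' b E3 E4) as C2.
  change plus with Rplus in C1, C2.
  assert (0 <= RInt f a a') by (apply RInt_ge_0; auto; intros; apply Hp; lra).
  assert (0 <= RInt f b' b) by (apply RInt_ge_0; auto; intros; apply Hp; lra).
  lra.
Qed.

Definition gy r x y := sqrt (x + r * y) * kk y.
Definition Ph r a b x := RInt (gy r x) a b.
Definition I2 r a b := RInt (fun x => kk x * Ph r a b x) a b.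

Section S.
Variable r : R.
Hypothesis Hr : 0 <= r.

Lemma gy_cont x y : 0 < x -> 0 < y < 1 -> continuous (gy r x) y.
Proof.
  intros Hx Hy. apply (@ex_derive_continuous R_AbsRing R_NormedModule).
  unfold gy, kk. auto_derive. repeat split; try lra; try nra.
  apply Rgt_not_eq, sqrt_lt_R0; lra. apply Rgt_not_eq, sqrt_lt_R0; lra.
Qed.

Lemma gy_ex x a b : 0 < x -> 0 < a -> a <= b -> b < 1 -> ex_RInt (gy r x) a b.
Proof. intros. apply cont_ex; auto. intros; apply gy_cont; lra. Qed.

Lemma gy_nonneg x y : 0 < y < 1 -> 0 <= gy r x y.
Proof. intros. unfold gy. apply Rmult_le_pos. apply sqrt_pos. left; apply kk_pos; auto. Qed.

Lemma Ph_holder a b x x' : 0 < x -> 0 < x' -> 0 < a -> a <= b -> b < 1 ->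
  Rabs (Ph r a b x - Ph r a b x') <= sqrt (Rabs (x - x')) * RInt kk a b.
Proof.
  intros Hx Hx' Ha Hab Hb. set (s := sqrt (Rabs (x - x'))).
  assert (E : Ph r a b x - Ph r a b x' = RInt (fun y => minus (gy r x y) (gy r x' y)) a b).
  { unfold Ph. rewrite (RInt_minus (V:=R_CompleteNormedModule)) by (apply gy_ex; auto). reflexivity. }
  rewrite E. change minus with Rminus.
  assert (Ed : ex_RInt (fun y => gy r x y - gy r x' y) a b).
  { exact (ex_RInt_minus (V:=R_NormedModule) _ _ a b (gy_ex x a b Hx Ha Hab Hb) (gy_ex x' a b Hx' Ha Hab Hb)). }
  assert (Ek : ex_RInt kk a b) by (apply kk_ex; auto).
  assert (P : forall y, a < y < b -> Rabs (gy r x y - gy r x' y) <= s * kk y).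
  { intros y Hy. unfold gy. rewrite <- Rmult_minus_distr_r, Rabs_mult.
    rewrite (Rabs_pos_eq (kk y)) by (left; apply kk_pos; lra).
    apply Rmult_le_compat_r. left; apply kk_pos; lra.
    unfold s. replace (x - x') with ((x + r * y) - (x' + r * y)) by ring.
    apply sqrt_holder; nra. }
  apply Rabs_le. split.
  - apply Rle_trans with (RInt (fun y => (- s) * kk y) a b).
    + rewrite RInt_scalR by auto. lra.
    + apply RInt_le; auto. apply ex_RInt_scalR; auto.
      intros y Hy. specialize (P y Hy). pose proof (Rle_abs (-(gy r x y - gy r x' y))).
      rewrite Rabs_Ropp in H. lra.
  - apply Rle_trans with (RInt (fun y => s * kk y) a b).
    + apply RInt_le; auto. apply ex_RInt_scalR; auto.
      intros y Hy. specialize (P y Hy). pose proof (Rle_abs (gy r x y - gy r x' y)). lra.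
    + rewrite RInt_scalR by auto. lra.
Qed.

Lemma kk_int_ge0 a b : 0 < a -> a <= b -> b < 1 -> 0 <= RInt kk a b.
Proof.
  intros. apply RInt_ge_0; auto. apply kk_ex; auto. intros; left; apply kk_pos; lra.
Qed.

Lemma Ph_cont a b x : 0 < x -> 0 < a -> a <= b -> b < 1 -> continuous (Ph r a b) x.
Proof.
  intros Hx Ha Hab Hb. apply eps_cont. intros eps He.
  set (K := RInt kk a b). assert (HK : 0 <= K) by (apply kk_int_ge0; auto).
  set (e := eps / (K + 1)). assert (He' : 0 < e) by (apply Rdiv_lt_0_compat; lra).
  exists (Rmin (x/2) (e * e)). split. apply Rmin_glb_lt; [lra | apply Rmult_lt_0_compat; lra].
  intros y Hy. pose proof (Rmin_l (x/2) (e*e)). pose proof (Rmin_r (x/2) (e*e)).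
  assert (Hy0 : 0 < y). { pose proof (Rle_abs (x - y)). rewrite Rabs_minus_sym in H1. lra. }
  eapply Rle_lt_trans. apply Ph_holder; auto.
  assert (Hs : sqrt (Rabs (y - x)) < e).
  { rewrite <- (sqrt_square e) by lra. apply sqrt_lt_1_alt. split. apply Rabs_pos. lra. }
  fold K. apply Rle_lt_trans with (e * K). apply Rmult_le_compat_r; auto. left; auto.
  apply Rle_lt_trans with (e * (K + 1) - e). right; ring.
  replace (e * (K + 1)) with eps by (unfold e; field; lra). lra.
Qed.

Lemma Ph_nonneg a b x : 0 < a -> a <= b -> b < 1 -> 0 < x -> 0 <= Ph r a b x.
Proof.
  intros. apply RInt_ge_0; auto. apply gy_ex; auto. intros; apply gy_nonneg; lra.
Qed.

Lemma I2f_cont a b x : 0 < a -> a <= b -> b < 1 -> 0 < x < 1 -> continuous (fun x => kk x * Ph r a b x) x.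
Proof.
  intros. apply (continuous_mult (K:=R_AbsRing) kk (Ph r a b)).
  apply kk_cont; auto. apply Ph_cont; auto; lra.
Qed.

Lemma I2f_ex a b a' b' : 0 < a' -> a' <= b' -> b' < 1 -> 0 < a -> a <= b -> b < 1 ->
  ex_RInt (fun x => kk x * Ph r a b x) a' b'.
Proof. intros. apply cont_ex; auto. intros; apply I2f_cont; auto; lra. Qed.

Lemma I2_mono a a' b b' : 0 < a <= a' -> a' <= b' -> b' <= b -> b < 1 -> I2 r a' b' <= I2 r a b.
Proof.
  intros. unfold I2.
  apply Rle_trans with (RInt (fun x => kk x * Ph r a b x) a' b').
  - apply RInt_le; auto. apply I2f_ex; auto; lra. apply I2f_ex; auto; lra.
    intros x Hx. apply Rmult_le_compat_l. left; apply kk_pos; lra.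
    unfold Ph. apply RInt_sub; try lra. apply gy_ex; lra.
    intros; apply gy_nonneg; lra.
  - apply RInt_sub; try lra. apply I2f_ex; lra.
    intros x Hx. apply Rmult_le_pos. left; apply kk_pos; lra. apply Ph_nonneg; lra.
Qed.

Lemma I2_bound a b : 0 < a -> a <= b -> b < 1 ->
  I2 r a b <= sqrt (1 + r) * (sqrt 2 * PI) * (sqrt 2 * PI).
Proof.
  intros Ha Hab Hb. pose proof (kk_int_le a b Ha Hab Hb). pose proof (kk_int_ge0 a b Ha Hab Hb).
  assert (HP : forall x, 0 < x < 1 -> Ph r a b x <= sqrt (1 + r) * (sqrt 2 * PI)).
  { intros x Hx. apply Rle_trans with (RInt (fun y => sqrt (1 + r) * kk y) a b).
    - apply RInt_le; auto. apply gy_ex; lra. apply ex_RInt_scalR, kk_ex; auto.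
      intros y Hy. unfold gy. apply Rmult_le_compat_r. left; apply kk_pos; lra.
      apply sqrt_le_1_alt. nra.
    - rewrite RInt_scalR by (apply kk_ex; auto). apply Rmult_le_compat_l; auto. apply sqrt_pos. }
  unfold I2. apply Rle_trans with (RInt (fun x => (sqrt (1 + r) * (sqrt 2 * PI)) * kk x) a b).
  - apply RInt_le; auto. apply I2f_ex; auto. apply ex_RInt_scalR, kk_ex; auto.
    intros x Hx. rewrite Rmult_comm. apply Rmult_le_compat_r. left; apply kk_pos; lra.
    apply HP; lra.
  - rewrite RInt_scalR by (apply kk_ex; auto). apply Rmult_le_compat_l; auto.
    apply Rmult_le_pos. apply sqrt_pos. pose proof (sqrt_pos 2). pose proof PI_RGT_0. nra.
Qed.

Lemma I2_pos : 0 < I2 r (1/4) (3/4).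
Proof.
  unfold I2. apply RInt_gt_0. lra.
  - intros x Hx. apply Rmult_lt_0_compat. apply kk_pos; lra.
    apply RInt_gt_0. lra. intros y Hy. unfold gy. apply Rmult_lt_0_compat.
    apply sqrt_lt_R0; nra. apply kk_pos; lra.
    intros; apply gy_cont; lra.
  - intros; apply I2f_cont; lra.
Qed.
End S.

Lemma deriv1_eq f x l : is_derive f x l -> deriv1 f x = l.
Proof.
  intro H. apply is_derive_Reals in H. unfold deriv1.
  pose proof (epsilon_spec (inhabits 0) (fun l => derivable_pt_lim f x l) (ex_intro _ l H)) as H2.
  eapply uniqueness_limite; eauto.
Qed.

Ltac pos := repeat (apply Rmult_lt_0_compat || apply Rinv_0_lt_compat); lra.

Section D.
Variables g u v : R.
Hypotheses (Hg : 0 < g < 1) (Hu : 0 < u < 1) (Hv : 0 < v < 1).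
Let E : forall w, (1+g)*(w*/(1+g)) = w.
Proof. intros; field; lra. Qed.
Ltac dl := unfold dlogp, sect, coord, pGUV, pOmega, pcell; simpl;
  apply deriv1_eq; auto_derive;
  [ repeat split; try rewrite E; try lra; try pos | field; lra ].
Definition D (h i j : nat) : R :=
  match i, h, j with
  | O, O, 1%nat => - / (1 - u)
  | O, 1%nat, O => / (g * (1+g))
  | O, 1%nat, 1%nat => / u
  | O, 2%nat, O => - (2 / ((1-g)*(1+g)))
  | O, 2%nat, 1%nat => / u
  | 1%nat, O, 2%nat => - / (1 - v)
  | 1%nat, 1%nat, O => / (g * (1+g))
  | 1%nat, 1%nat, 2%nat => / v
  | 1%nat, 2%nat, O => - (2 / ((1-g)*(1+g)))
  | 1%nat, 2%nat, 2%nat => / v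
  | _, _, _ => 0
  end.
Lemma dall h i j : (h < 3)%nat -> (i < 2)%nat -> (j < 3)%nat -> dlogp pGUV h i j g u v = D h i j.
Proof.
  intros. destruct h as [|[|[|h]]]; try lia; destruct i as [|[|i]]; try lia;
   destruct j as [|[|[|j]]]; try lia; unfold D; dl.
Qed.
Variables m0 m1 : nat.
Hypotheses (H0 : (1 <= m0)%nat) (H1 : (1 <= m1)%nat).
Lemma det_val : det3 (fun j k => fisher pGUV m0 m1 j k g u v) =
  2 * (INR m0 * u + INR m1 * v) * INR m0 * INR m1 /
  ((1+g)*(1+g)*g*(1-g)*u*(1-u)*v*(1-v)).
Proof.
  unfold det3, fisher; simpl sum_f_R0.
  rewrite !dall by lia. unfold D, pGUV, pOmega, pcell; simpl.
  field. lra.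
Qed.
Lemma sqrt_of_sq x y : 0 <= y -> y * y = x -> sqrt x = y.
Proof. intros Hy <-. apply sqrt_square; auto. Qed.

Lemma jeff_val : jeffreysGUV m0 m1 g u v =
  sqrt (2 * INR m0 * INR m0 * INR m1) *
  (/ sqrt g * / sqrt (1 - g) / (1 + g) * sqrt (u + INR m1 / INR m0 * v)
            * / sqrt u * / sqrt (1 - u) * / sqrt v * / sqrt (1 - v)).
Proof.
  assert (Hm0 : 0 < INR m0) by (apply lt_0_INR; lia).
  assert (Hm1 : 0 < INR m1) by (apply lt_0_INR; lia).
  assert (Hw : 0 < u + INR m1 / INR m0 * v).
  { assert (0 < INR m1 / INR m0 * v) by (unfold Rdiv; pos). lra. }
  unfold jeffreysGUV. rewrite det_val. apply sqrt_of_sq.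
  - apply Rmult_le_pos. apply sqrt_pos.
    repeat (apply Rmult_le_pos || apply Rlt_le, Rinv_0_lt_compat || unfold Rdiv);
     try apply sqrt_pos; try apply sqrt_lt_R0; try lra.
  - pose proof (sqrt_sqrt (2 * INR m0 * INR m0 * INR m1) ltac:(apply Rlt_le; pos)) as e1.
    pose proof (sqrt_sqrt g ltac:(lra)) as e2.
    pose proof (sqrt_sqrt (1-g) ltac:(lra)) as e3.
    pose proof (sqrt_sqrt u ltac:(lra)) as e4.
    pose proof (sqrt_sqrt (1-u) ltac:(lra)) as e5.
    pose proof (sqrt_sqrt v ltac:(lra)) as e6.
    pose proof (sqrt_sqrt (1-v) ltac:(lra)) as e7.
    pose proof (sqrt_sqrt _ (Rlt_le _ _ Hw)) as e8.
    pose proof (sqrt_lt_R0 g ltac:(lra)).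
    pose proof (sqrt_lt_R0 (1-g) ltac:(lra)).
    pose proof (sqrt_lt_R0 u ltac:(lra)).
    pose proof (sqrt_lt_R0 (1-u) ltac:(lra)).
    pose proof (sqrt_lt_R0 v ltac:(lra)).
    pose proof (sqrt_lt_R0 (1-v) ltac:(lra)).
    set (A := sqrt (2 * INR m0 * INR m0 * INR m1)) in *.
    set (B := sqrt (u + INR m1 / INR m0 * v)) in *.
    set (sg := sqrt g) in *. set (s1g := sqrt (1-g)) in *.
    set (su := sqrt u) in *. set (s1u := sqrt (1-u)) in *.
    set (sv := sqrt v) in *. set (s1v := sqrt (1-v)) in *.
    transitivity ((A*A) * (B*B) / ((sg*sg)*(s1g*s1g)*((1+g)*(1+g))*(su*su)*(s1u*s1u)*(sv*sv)*(s1v*s1v))).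
    + field. repeat split; lra.
    + rewrite e1, e2, e3, e4, e5, e6, e7, e8. field. repeat split; lra.
Qed.
End D.

Ltac rring := match goal with |- ?x = ?y => change (@eq R x y) end; ring.

Lemma int2_lem r G c a b : 0 <= r -> 0 < a -> a <= b -> b < 1 ->
  (forall x y, a <= x <= b -> a <= y <= b -> G x y = c * (kk x * gy r x y)) ->
  int2 G a b = c * I2 r a b.
Proof.
  intros Hr Ha Hab Hb HG. unfold int2, I2.
  assert (Ein : forall x, a <= x <= b -> Defs.RInt (fun y => G x y) a b = c * (kk x * Ph r a b x)).
  { intros x Hx.
    assert (Ex : ex_RInt (fun y => (c * kk x) * gy r x y) a b)
      by (apply ex_RInt_scalR, gy_ex; auto; lra).
    rewrite (DR_ext _ (fun y => (c * kk x) * gy r x y) a b Hab); auto.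
    rewrite RInt_scalR by (apply gy_ex; auto; lra). unfold Ph. rring.
    intros y Hy. rewrite HG; auto. rring. }
  assert (Eo : ex_RInt (fun x => c * (kk x * Ph r a b x)) a b)
    by (apply ex_RInt_scalR, I2f_ex; auto).
  rewrite (DR_ext (fun x => Defs.RInt (fun y => G x y) a b) (fun x => c * (kk x * Ph r a b x)) a b Hab Ein Eo).
  apply RInt_scalR. apply I2f_ex; auto.
Qed.

Theorem proposition1 (m0 m1 : nat) (Hm0 : (1 <= m0)%nat) (Hm1 : (1 <= m1)%nat) :
  let r := INR m1 / INR m0 in
  (* phi maps Omega bijectively onto (0,1)^3 *)
  (forall t, inOmega t ->
     let '(g, u, v) := phi t in in01 g /\ in01 u /\ in01 v) /\
  (forall g u v, in01 g -> in01 u -> in01 v ->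
     exists! t, inOmega t /\ phi t = (g, u, v)) /\
  (* form of Jeffreys' prior in (gamma, U, V), up to a positive constant *)
  (exists C, 0 < C /\
     forall g u v, in01 g -> in01 u -> in01 v ->
       jeffreysGUV m0 m1 g u v =
       C * (/ sqrt g * / sqrt (1 - g) / (1 + g) * sqrt (u + r * v)
            * / sqrt u * / sqrt (1 - u) * / sqrt v * / sqrt (1 - v))) /\
  (* properness, independence of gamma and (U,V), marginal of gamma *)
  (exists Z, 0 < Z /\
     improper3 (jeffreysGUV m0 m1) Z /\
     (forall g, in01 g ->
        improper2 (fun u v => jeffreysGUV m0 m1 g u v / Z) (pi_gamma g)) /\
     (forall u v, in01 u -> in01 v ->
        exists q, improper1 (fun g => jeffreysGUV m0 m1 g u v / Z) q /\
          forall g, in01 g ->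
            jeffreysGUV m0 m1 g u v / Z = pi_gamma g * q)).
Proof.
  intros r.
  assert (Hm0' : 0 < INR m0) by (apply lt_0_INR; lia).
  assert (Hm1' : 0 < INR m1) by (apply lt_0_INR; lia).
  assert (Hr : 0 <= r) by (unfold r; left; apply Rdiv_lt_0_compat; auto).
  set (C := sqrt (2 * INR m0 * INR m0 * INR m1)).
  assert (HC : 0 < C).
  { apply sqrt_lt_R0. repeat apply Rmult_lt_0_compat; lra. }
  assert (JV : forall g u v, in01 g -> in01 u -> in01 v ->
    jeffreysGUV m0 m1 g u v = C * (ff g * (kk u * gy r u v))).
  { intros g u v Hg Hu Hv. rewrite jeff_val by auto. unfold C, ff, gy, kk, r. ring. }
  split; [|split; [|split]].
  - intros [[g l0] l1] [Hg [H0 H1]]. simpl. unfold in01.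
    assert (E : forall l, 0 < l < 1 / (1 + g) -> 0 < (1 + g) * l < 1).
    { intros l Hl. split. apply Rmult_lt_0_compat; lra.
      apply Rmult_lt_reg_l with (/ (1 + g)). apply Rinv_0_lt_compat; lra.
      rewrite <- Rmult_assoc, Rinv_l, Rmult_1_l, Rmult_1_r by lra. lra. }
    auto.
  - intros g u v Hg Hu Hv. unfold in01 in *.
    exists (g, u / (1 + g), v / (1 + g)). split.
    + split.
      * unfold inOmega. split; auto. split; split;
          try (apply Rdiv_lt_0_compat; lra);
          apply Rmult_lt_compat_r; try (apply Rinv_0_lt_compat; lra); lra.
      * simpl. f_equal; [f_equal|]; field; lra.
    + intros [[g' l0] l1] [_ He]. simpl in He. injection He as E1 E2 E3. subst g'.
      rewrite <- E2, <- E3. f_equal; [f_equal|]; field; lra.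
  - exists C. split; auto. intros g u v Hg Hu Hv. rewrite jeff_val by auto. reflexivity.
  - destruct (LC_mono (I2 r) (sqrt (1 + r) * (sqrt 2 * PI) * (sqrt 2 * PI))) as [W [LW HW]].
    { intros. apply I2_mono; auto; lra. }
    { intros. apply I2_bound; auto; lra. }
    assert (HW0 : 0 < W).
    { pose proof (I2_pos r Hr). pose proof (HW (1/4) (3/4) ltac:(lra) ltac:(lra)). lra. }
    pose proof PI_RGT_0. pose proof (sqrt_lt_R0 2 ltac:(lra)).
    set (Z := C * (W * (PI / sqrt 2))).
    assert (HZ : 0 < Z).
    { unfold Z. apply Rmult_lt_0_compat; auto. apply Rmult_lt_0_compat; auto. apply Rdiv_lt_0_compat; auto. }
    exists Z. split; [auto | split; [|split]].
    + unfold improper3.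
      apply LC_ext with (fun a b => C * (I2 r a b * RInt ff a b)).
      2: apply LC_scal, LC_mul; auto; apply LC_ff.
      intros a b Ha Hb. unfold int3.
      assert (Ei : forall g, a <= g <= b ->
        int2 (jeffreysGUV m0 m1 g) a b = (C * I2 r a b) * ff g).
      { intros g Hg.
        assert (HG : forall x y, a <= x <= b -> a <= y <= b ->
          jeffreysGUV m0 m1 g x y = (C * ff g) * (kk x * gy r x y)).
        { intros x y Hx Hy. rewrite JV; unfold in01; try lra; ring. }
        rewrite (int2_lem r _ (C * ff g) a b Hr ltac:(lra) ltac:(lra) ltac:(lra) HG). ring. }
      assert (Ex : ex_RInt (fun g => (C * I2 r a b) * ff g) a b)
        by (apply ex_RInt_scalR, ff_ex; lra).
      rewrite (DR_ext (fun g => int2 (jeffreysGUV m0 m1 g) a b) _ a b ltac:(lra) Ei Ex).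
      rewrite RInt_scalR by (apply ff_ex; lra). rring.
    + intros g Hg. unfold improper2.
      replace (pi_gamma g) with ((C * ff g / Z) * W).
      2:{ unfold in01 in Hg. assert (0 < sqrt g) by (apply sqrt_lt_R0; lra).
          assert (0 < sqrt (1 - g)) by (apply sqrt_lt_R0; lra).
          unfold pi_gamma, Z, ff. field. repeat split; lra. }
      apply LC_ext with (fun a b => (C * ff g / Z) * I2 r a b).
      2: apply LC_scal; auto.
      intros a b Ha Hb.
      assert (HG : forall x y, a <= x <= b -> a <= y <= b ->
          jeffreysGUV m0 m1 g x y / Z = (C * ff g / Z) * (kk x * gy r x y)).
      { intros x y Hx Hy. rewrite JV by (unfold in01 in *; lra). field. lra. }
      symmetry; exact (int2_lem r _ (C * ff g / Z) a b Hr ltac:(lra) ltac:(lra) ltac:(lra) HG).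
    + intros u v Hu Hv.
      set (c := C * (kk u * gy r u v) / Z).
      exists (c * (PI / sqrt 2)). split.
      * unfold improper1.
        apply LC_ext with (fun a b => c * RInt ff a b).
        2: apply LC_scal, LC_ff.
        intros a b Ha Hb.
        assert (Ei : forall g, a <= g <= b -> jeffreysGUV m0 m1 g u v / Z = c * ff g).
        { intros g Hg. rewrite JV by (unfold in01 in *; lra). unfold c. field. lra. }
        assert (Ex : ex_RInt (fun g => c * ff g) a b)
          by (apply ex_RInt_scalR, ff_ex; lra).
        rewrite (DR_ext (fun g => jeffreysGUV m0 m1 g u v / Z) _ a b ltac:(lra) Ei Ex).
        rewrite RInt_scalR by (apply ff_ex; lra). rring.
      * intros g Hg. rewrite JV by auto. unfold in01 in Hg.
        assert (0 < sqrt g) by (apply sqrt_lt_R0; lra).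
        assert (0 < sqrt (1 - g)) by (apply sqrt_lt_R0; lra).
        unfold c, pi_gamma, ff, Z. field. repeat split; lra.
Qed.
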